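(* Let $\Omega$ be a Cantor group with identity $e$ and let $T$ be a minimal translation of $\Omega$. For $f\in C(\Omega,\mathbb{R})$ let $F(\omega)=(f(T^n(\omega)))_{n\in\mathbb{Z}}\in\ell^\infty(\mathbb{Z})$. Then there exists $f\in C(\Omega,\mathbb{R})$ such that $\mathrm{hull}(F(e))\cong\Omega$ as topological groups.
   Context: A Cantor group is a totally disconnected compact abelian topological group without isolated points. A translation of a topological group $\Omega$ is a map $T(\omega)=\omega\cdot\omega_0$ for some fixed $\omega_0\in\Omega$; it is minimal if $\{T^n(\omega):n\in\mathbb{Z}\}$ is dense in $\Omega$ for every $\omega$. $\sigma$ is the left shift on $\ell^\infty(\mathbb{Z})$ (sup norm), $(\sigma d)_n=d_{n+1}$, and $\mathrm{hull}(d)$ is the closure of $\{\sigma^k d:k\in\mathbb{Z}\}$. In this setting $F(e)$ is limit-periodic (a uniform limit of periodic sequences), and for a limit-periodic $d$, $\mathrm{hull}(d)$ carries a unique topological group structure with identity $d$ such that $k\mapsto\sigma^k(d)$ is a homomorphism; this is the group structure on $\mathrm{hull}(F(e))$. *)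

(* Defs.v *)
From HB Require Import structures.
From mathcomp Require Import all_boot all_order all_algebra.
From mathcomp Require Import all_classical all_reals all_analysis.
Set Implicit Arguments. Unset Strict Implicit. Unset Printing Implicit Defensive.
Import Order.TTheory GRing.Theory Num.Theory numFieldTopology.Exports numFieldNormedType.Exports.
Local Open Scope classical_set_scope.
Local Open Scope ring_scope.

Definition cantor_group (Om : topologicalZmodType) : Prop :=
  [/\ totally_disconnected [set: Om], compact [set: Om]
    & forall x : Om, ~ open [set x]].

(* T^n(w) for the translation T(w) = w + w0, n an integer. *)
Definition transl_pow (Om : topologicalZmodType) (w0 : Om) (n : int) (w : Om) : Om :=
  w + w0 *~ n.

Definition minimal_translation (Om : topologicalZmodType) (w0 : Om) : Prop :=
  forall w : Om, dense (range (fun n : int => transl_pow w0 n w)).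

(* l^oo(Z) carrying the sup-norm topology: sequences Z -> R with the topology
   of uniform convergence (which agrees with the sup-norm topology on bounded
   sequences; all sequences considered below are bounded). *)
Notation seqZ R := ({uniform int -> R}) (only parsing).

Definition Fseq (R : realType) (Om : topologicalZmodType) (w0 : Om) (f : Om -> R)
  (w : Om) : seqZ R := fun n => f (transl_pow w0 n w).

Definition shift (R : realType) (k : int) (d : seqZ R) : seqZ R := fun n => d (n + k).

Definition hull (R : realType) (d : seqZ R) : set (seqZ R) :=
  closure (range (fun k : int => shift k d)).

(* By the context,
   for limit-periodic d such a structure is unique. *)
Definition hull_group_structure (R : realType) (d : seqZ R)
  (mul : seqZ R -> seqZ R -> seqZ R) (inv : seqZ R -> seqZ R) : Prop :=
  let H := hull d in
  [/\ (forall x y, H x -> H y -> H (mul x y)),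
      (forall x, H x -> H (inv x)),
      (forall x y z, H x -> H y -> H z -> mul x (mul y z) = mul (mul x y) z),
      (forall x, H x -> mul d x = x /\ mul x d = x)
    & (forall x, H x -> mul x (inv x) = d /\ mul (inv x) x = d)] /\
  [/\ {within H `*` H, continuous (fun p : seqZ R * seqZ R => mul p.1 p.2)},
      {within H, continuous inv}
    & forall k m : int, mul (shift k d) (shift m d) = shift (k + m) d].

Definition hull_top_group_iso (R : realType) (Om : topologicalZmodType)
  (d : seqZ R) (mul : seqZ R -> seqZ R -> seqZ R) (phi : seqZ R -> Om) : Prop :=
  [/\ {within hull d, continuous phi},
      (exists psi : Om -> seqZ R,
         [/\ continuous psi,
             (forall w, hull d (psi w) /\ phi (psi w) = w)
           & (forall x, hull d x -> psi (phi x) = x)])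
    & forall x y, hull d x -> hull d y -> phi (mul x y) = phi x + phi y].

(* Main.v *)
Require Import Defs.
From HB Require Import structures.
From mathcomp Require Import all_boot all_order all_algebra.
From mathcomp Require Import all_classical all_reals all_analysis.
Import Order.TTheory GRing.Theory Num.Theory numFieldTopology.Exports numFieldNormedType.Exports.
Local Open Scope classical_set_scope.
Local Open Scope ring_scope.
Section TopGroup.
Context (Om : topologicalZmodType).

Lemma cont_subr (a : Om) : continuous (fun z : Om => z - a).
Proof.
move=> z; apply: (@continuous_comp _ _ _ (fun z => (z, a)) (fun p : Om * Om => p.1 - p.2)); last exact: sub_continuous.
by apply: cvg_pair; [exact: cvg_id | exact: cvg_cst].
Qed.

Lemma cont_subl (a : Om) : continuous (fun z : Om => a - z).
Proof.
move=> z; apply: (@continuous_comp _ _ _ (fun z => (a, z)) (fun p : Om * Om => p.1 - p.2)); last exact: sub_continuous.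
by apply: cvg_pair; [exact: cvg_cst | exact: cvg_id].
Qed.

Lemma open_subr (A : set Om) a : open A -> open [set z | A (z - a)].
Proof. by move=> oA; have /continuousP := cont_subr a; apply. Qed.

Lemma open_subl (A : set Om) a : open A -> open [set z | A (a - z)].
Proof. by move=> oA; have /continuousP := cont_subl a; apply. Qed.

Lemma sep0 (td : totally_disconnected [set: Om]) (x : Om) : x != 0 ->
  exists U : set Om, [/\ open U, U 0 & ~ U x].
Proof.
move=> x0.
have [[U [oU Ux U0]]|nU] := pselect (exists U : set Om, [/\ open U, U x & ~ U 0]).
  exists [set z | U (x - z)]; split; first exact: open_subl.
    by rewrite /= subr0.
  by rewrite /= subrr.
apply: contrapT => nV.
have : connected_component [set: Om] 0 x.
  exists [set 0; x]; last by right.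
  split => //; first by left.
  - move=> B B0 [C oC BE] _; apply/seteqP; split; first by rewrite BE; apply: subIsetl.
    have [b Bb] := B0.
    have : C 0 /\ C x.
      move: Bb; rewrite BE => -[[->|->] Cb].
        split => //; apply: contrapT => nCx; apply: nV; exists C; split => //.
      split => //; apply: contrapT => nC0; apply: nU; exists C; split => //.
    by move=> [C0 Cx] y [->|->]; rewrite BE; split => //; [left|right].
by rewrite (td 0) // => /= x0E; rewrite x0E eqxx in x0.
Qed.

Lemma om_hausdorff (td : totally_disconnected [set: Om]) : hausdorff_space Om.
Proof.
move=> x y clxy; apply: contrapT => /eqP xy.
have yx0 : y - x != 0 by rewrite subr_eq0 eq_sym.
have [U [oU U0 nU]] := sep0 td _ yx0.
pose U' := [set z | U (z - (x - y))].
have oU' : open U' by exact: open_subr.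
have : \forall p \near (x, y), U' (p.1 - p.2).
  have nU' : nbhs (x - y) U'.
    by apply: open_nbhs_nbhs; split => //; rewrite /U' /= subrr.
  exact: (@sub_continuous Om (x, y) _ nU').
case=> [[A B] /= [nA nB] AB].
have [z [Az Bz]] := clxy A B nA nB.
apply: nU; have := AB (z, z) (conj Az Bz); rewrite /U' /=.
by rewrite subrr sub0r opprB.
Qed.


Section ZeroDim.
Context (R : realType) (td : totally_disconnected [set: Om]) (cpt : compact [set: Om]).

Definition Qc (x : Om) := [set y | forall C : set Om, clopen C -> C x -> C y].

Lemma Q_split (x : Om) (U V : set Om) : open U -> open V -> U `&` V = set0 ->
  Qc x `<=` U `|` V -> U x -> Qc x `<=` U.
Proof.
move=> oU oV UV QUV Ux.
pose K := ~` (U `|` V).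
have cK : compact K.
  apply: (subclosed_compact _ cpt) => //; exact: open_closedC (openU oU oV).
have /compact_near_coveringP ncK := cK.
pose F := filter_from [set C : set Om | clopen C /\ C x]
  (fun C => [set C' : set Om | clopen C' /\ C' x /\ C' `<=` C]).
have FF : Filter F.
  apply: filter_from_filter; first by exists setT; split => //; exact: clopenT.
  move=> C1 C2 [cC1 C1x] [cC2 C2x]; exists (C1 `&` C2).
    by split; [exact: clopenI | by split].
  move=> C' [cC' [C'x sub]]; split; split => //; split => //.
    by apply: subset_trans sub _; apply: subIsetl.
  by apply: subset_trans sub _; apply: subIsetr.
have := ncK (set Om) F (fun C y => ~ C y) FF.
case.
  move=> z Kz.
  have : ~ Qc x z by move=> /QUV; exact: Kz.
  move=> /existsNP [C /not_implyP [cC /not_implyP [Cx nCz]]].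
  rewrite /prop_near2.
  exists (~` C, [set C' : set Om | clopen C' /\ C' x /\ C' `<=` C]).
    split => /=.
      by apply: open_nbhs_nbhs; split => //; apply: closed_openC; case: cC.
    by exists C.
  by move=> [z' C'] /= [nCz' [_ [_ sub]]] C'z'; apply: nCz'; apply: sub.
move=> C [cC Cx] /(_ C) H.
have {}H : K `<=` (fun y => ~ C y) by apply: H; split => //; split => //.
have cD : clopen (C `&` U).
  split; first exact: openI (proj1 cC) oU.
  have -> : C `&` U = C `&` ~` V.
    apply/seteqP; split => z [Cz Hz]; split => //.
      by move=> Vz; have : (U `&` V) z by []; rewrite UV.
    apply: contrapT => nUz; apply: (H z) => //; by case.
  exact: closedI (proj2 cC) (open_closedC oV).
by move=> y Qy; have [] := Qy _ cD.
Qed.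

Lemma Q_conn (x : Om) : connected (Qc x).
Proof.
have hs := om_hausdorff td.
have nrm : normal_space Om by exact: compact_normal.
have /(@normal_openP R Om) nrmP := nrm.
have Qcl : closed (Qc x).
  have -> : Qc x = \bigcap_(C in [set C : set Om | clopen C /\ C x]) C.
    apply/seteqP; split => y Hy.
      by move=> C [cC Cx]; apply: Hy.
    by move=> C cC Cx; apply: Hy.
  by apply: closed_bigI => C [[]].
move=> B [b Bb] [C1 oC1 BE1] [C2 cC2 BE2].
have clB : closed B by rewrite BE2; exact: closedI.
have clA2 : closed (Qc x `&` ~` C1) by apply: closedI => //; exact: open_closedC.
have dis : B `&` (Qc x `&` ~` C1) = set0.
  by apply/seteqP; split => // z [+ [_ nC]]; rewrite BE1 => -[].
have [U [V [oU oV BU A2V UV]]] := nrmP _ _ clB clA2 dis.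
have QUV : Qc x `<=` U `|` V.
  move=> y Qy; have [C1y|nC1y] := pselect (C1 y).
    by left; apply: BU; rewrite BE1.
  by right; apply: A2V.
have Qx : Qc x x by [].
have [C1x|nC1x] := pselect (C1 x).
  have QU := @Q_split x U V oU oV UV QUV (BU x ltac:(by rewrite BE1)).
  apply/seteqP; split; first by rewrite BE1; apply: subIsetl.
  move=> y Qy; rewrite BE1; split => //; apply: contrapT => nC1y.
  have : (U `&` V) y by split; [exact: QU | apply: A2V].
  by rewrite UV.
have VU : V `&` U = set0 by rewrite setIC.
have QU' : Qc x `<=` U `|` V -> Qc x `<=` V.
  move=> _; apply: (@Q_split x V U oV oU VU); first by move=> y /QUV [] ?; [right|left].
  exact: A2V.
have QV := QU' QUV.
have : (U `&` V) b.
  split; first exact: BU.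
  by apply: QV; move: Bb; rewrite BE1 => -[].
by rewrite UV.
Qed.

Lemma zero_dim (x y : Om) : x != y -> exists U : set Om, [/\ clopen U, U x & ~ U y].
Proof.
move=> xy; apply: contrapT => nU.
have : connected_component [set: Om] x y.
  exists (Qc x) => //.
    split => //; exact: Q_conn.
  move=> C cC Cx; apply: contrapT => nCy; apply: nU; exists C; split => //.
by rewrite (td x) // => /= yx; rewrite yx eqxx in xy.
Qed.

End ZeroDim.

Definition subgrp (S : set Om) := S 0 /\ forall x y, S x -> S y -> S (x - y).

Lemma subgrpN S x : subgrp S -> S x -> S (- x).
Proof. by move=> [S0 SB] Sx; rewrite -sub0r; apply: SB. Qed.

Lemma subgrpD S x y : subgrp S -> S x -> S y -> S (x + y).
Proof.
move=> sS Sx Sy; rewrite -[y]opprK; apply: sS.2 => //; exact: subgrpN.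
Qed.

Lemma subgrpMz S x (z : int) : subgrp S -> S x -> S (x *~ z).
Proof.
move=> sS Sx.
have Hn (k : nat) : S (x *+ k).
  elim: k => [|k IH]; first by rewrite mulr0n; exact: sS.1.
  by rewrite mulrS; apply: subgrpD.
case: z => k; first by rewrite -pmulrn.
by rewrite NegzE mulrNz; apply: subgrpN => //; rewrite -pmulrn.
Qed.

Lemma subgrp_open S : subgrp S -> nbhs (0 : Om) S -> open S.
Proof.
move=> sS nS; rewrite openE => s Ss; rewrite /interior.
have : (fun z => z - s) @ s --> (0:Om) by rewrite -(subrr s); exact: cont_subr.
move=> /(_ _ nS) /= H; near=> z.
have Szs : S (z - s) by near: z; exact: H.
by have := @subgrpD S _ _ sS Szs Ss; rewrite subrK.
Unshelve. all: by end_near. Qed.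

Lemma subgrp_closed S : subgrp S -> open S -> closed S.
Proof.
move=> sS oS; rewrite -openC openE => z nSz; rewrite /interior.
have : (fun y => y - z) @ z --> (0:Om) by rewrite -(subrr z); exact: cont_subr.
move=> /(_ S (open_nbhs_nbhs (conj oS sS.1))) /= H; near=> y => Sy.
have Syz : S (y - z) by near: y; exact: H.
apply: nSz.
by have := sS.2 _ _ Sy Syz; rewrite opprB addrC subrK.
Unshelve. all: by end_near. Qed.

Arguments subgrpN {S x}. Arguments subgrpD {S x y}. Arguments subgrpMz {S x}.
Arguments subgrp_open {S}. Arguments subgrp_closed {S}.

Definition stab (U : set Om) := [set p | forall u, U (u + p) <-> U u].

Lemma stab_subgrp U : subgrp (stab U).
Proof.
split; first by move=> u; rewrite addr0.
move=> x y Sx Sy u.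
rewrite -(Sy (u + (x - y))) addrA subrK; exact: Sx.
Qed.

Lemma stab_nbhs (U : set Om) : compact [set: Om] -> clopen U -> nbhs (0 : Om) (stab U).
Proof.
move=> cpt [oU cU].
have /compact_near_coveringP ncK := cpt.
have H : \forall w \near (0 : Om), [set: Om] `<=` (fun x => U (x + w) <-> U x).
  apply: ncK => x _.
  have gen (W : set Om) : open W -> W x -> (W = U \/ W = ~` U) ->
      \forall x' \near x & w \near (0 : Om), U (x' + w) <-> U x'.
    move=> oW Wx WU.
    have nW : nbhs (x + 0) W by rewrite addr0; exact: open_nbhs_nbhs.
    have := @add_continuous Om (x, 0) _ nW.
    case=> [[A B] /= [nA nB] AB].
    rewrite /prop_near2; exists (A `&` W, B); first by split; [apply: filterI => //; exact: open_nbhs_nbhs | exact: nB].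
    move=> [x' w] /= [[Ax' Wx'] Bw].
    have := AB (x', w) (conj Ax' Bw) => /= Ww.
    by case: WU => WE; move: Ww Wx'; rewrite WE //=.
  have [Ux|nUx] := pselect (U x).
    exact: (gen U oU Ux (or_introl erefl)).
  exact: (gen (~` U) (closed_openC cU) nUx (or_intror erefl)).
by apply: filterS H => w Hw u; exact: Hw.
Qed.


Section Orbit.
Context (R : realType) (td : totally_disconnected [set: Om]) (cpt : compact [set: Om])
  (nop : forall x : Om, ~ open [set x]) (w0 : Om) (mt : minimal_translation w0).

Lemma orbit_dense (O : set Om) : open O -> O !=set0 -> exists n : int, O (w0 *~ n).
Proof.
move=> oO O0; have [x [Ox [n _ nx]]] := mt 0 O O0 oO.
by exists n; move: Ox; rewrite -nx /transl_pow add0r.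
Qed.

Arguments orbit_dense {O}.

Definition Vm (m : nat) : set Om :=
  closure [set w0 *~ n | n in [set n : int | (m%:Z %| n)%Z]].

Definition goodS (m : nat) (S : set Om) :=
  [/\ open S, subgrp S & forall n : int, S (w0 *~ n) <-> (m%:Z %| n)%Z].

Definition good (m : nat) := exists S, goodS m S.

Lemma goodS_V m S : goodS m S -> Vm m = S.
Proof.
move=> [oS sS SE]; apply/seteqP; split.
  have cS := subgrp_closed sS oS.
  rewrite (closure_id S).1 //; apply: closureS => _ [n mn <-]; exact/SE.
move=> s Ss B nB.
have [Op [oO Os] OB] : exists2 Op : set Om, open_nbhs s Op & Op `<=` B.
  by move: nB; rewrite nbhsE => -[Op ? ?]; exists Op.
have [n [On Sn]] : exists n, Op (w0 *~ n) /\ S (w0 *~ n).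
  have [n [On Sn]] := orbit_dense (openI oO oS) (ex_intro _ s (conj Os Ss)).
  by exists n.
by exists (w0 *~ n); split; [exists n => //; exact/SE | exact: OB].
Qed.

Arguments goodS_V {m S}.

Lemma good_clopen m : good m -> clopen (Vm m).
Proof.
move=> [S gS]; rewrite (goodS_V gS); case: gS => oS sS _.
by split => //; exact: subgrp_closed.
Qed.

Lemma Vm0 m : Vm m 0.
Proof. by apply: subset_closure; exists 0 => //; exact: dvdz0. Qed.

Lemma exists_good_sep (p : Om) : p != 0 -> exists m, good m /\ ~ Vm m p.
Proof.
move=> p0.
have [U [cU U0 nUp]] := @zero_dim R td cpt 0 p ltac:(by rewrite eq_sym).
pose S := stab U.
have sS := stab_subgrp U.
have oS : open S by apply: subgrp_open => //; exact: stab_nbhs.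
have SU : S `<=` U by move=> s Ss; have := Ss 0; rewrite add0r => ->.
have hs := om_hausdorff td.
have cl0 : closed [set (0 : Om)] by exact: (@accessible_closed_set1 Om (@hausdorff_accessible Om hs) 0).
have [n [Sn n0]] : exists n : int, S (w0 *~ n) /\ w0 *~ n != 0.
  have oS' : open (S `&` ~` [set 0]) by apply: openI => //; exact: closed_openC.
  have [z [Sz z0]] : (S `&` ~` [set 0]) !=set0.
    apply: contrapT => /set0P/negP; rewrite negbK => /eqP S0.
    apply: (nop 0); suff -> : [set (0:Om)] = S by [].
    apply/seteqP; split; first by move=> _ ->; exact: sS.1.
    move=> z Sz; apply: contrapT => z0.
    by have : (S `&` ~` [set 0]) z by []; rewrite S0.
  have [n [Sn n0]] := orbit_dense oS' (ex_intro _ z (conj Sz z0)).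
  by exists n; split => //; apply/eqP.
pose P := fun k : nat => (0 < k)%N && `[< S (w0 *~ k%:Z) >].
have exP : exists k, P k.
  case: n Sn n0 => k Sk k0.
    exists k; rewrite /P; apply/andP; split; last exact/asboolP.
    by rewrite lt0n; apply: contraNneq k0 => ->; rewrite mulr0z.
  exists k.+1; rewrite /P; apply/andP; split => //; apply/asboolP.
  by move: Sk; rewrite NegzE mulrNz => /(subgrpN sS); rewrite opprK.
case: (ex_minnP exP) => m /andP[m0 /asboolP Sm] mmin.
have gS : goodS m S.
  split => // k; split.
    move=> Sk; apply/dvdz_mod0P.
    have m0' : (m%:Z != 0) by rewrite eqz_nat -lt0n.
    have r0 := modz_ge0 k m0'.
    have rm : (k %% m)%Z < m%:Z by apply: ltz_pmod; rewrite ltz_nat.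
    have Sr : S (w0 *~ (k %% m)%Z).
      have -> : w0 *~ (k %% m)%Z = w0 *~ k - (w0 *~ m%:Z) *~ (k %/ m)%Z.
        by rewrite -mulrzA mulrC -mulrzBr {2}(divz_eq k m%:Z) addrC addKr.
      apply: (sS.2 _ _ Sk); exact: (subgrpMz _ sS Sm).
    apply: contrapT => rn0.
    have := mmin `|(k %% m)%Z|%N.
    have rE : `|(k %% m)%Z|%N%:Z = (k %% m)%Z by rewrite gez0_abs.
    rewrite /P rE; have -> : `[< S (w0 *~ (k %% m)%Z) >] by exact/asboolP.
    rewrite andbT -ltz_nat rE lt_neqAle r0 andbT eq_sym.
    have -> : ((k %% m)%Z != 0) by apply/eqP.
    by move=> /(_ isT); rewrite -lez_nat rE leNgt rm.
  by move=> /dvdzP [q ->]; rewrite mulrC mulrzA; exact: (subgrpMz _ sS Sm).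
exists m; split; first by exists S.
by rewrite (goodS_V gS) => /SU.
Qed.

End Orbit.

End TopGroup.

Section Fconstr.
Context (Om : topologicalZmodType) (R : realType) (td : totally_disconnected [set: Om])
  (cpt : compact [set: Om]) (nop : forall x : Om, ~ open [set x]) (w0 : Om)
  (mt : minimal_translation w0).

Let V := Vm Om w0.
Let gd := good Om w0.
Let gcl := @good_clopen Om w0 mt.

Definition Aset (N : nat) : set Om := [set y | forall j, (j < N)%N -> gd j -> V j y].

Lemma Aset_open N : open (Aset N).
Proof.
elim: N => [|N IH].
  have -> : Aset 0 = setT by apply/seteqP; split => // y _ j; rewrite ltn0.
  exact: openT.
have -> : Aset N.+1 = Aset N `&` [set y | gd N -> V N y].
  apply/seteqP; split => y.
    by move=> Ay; split => [j jN|]; apply: Ay => //; apply: ltnW.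
  move=> [Ay HN] j; rewrite ltnS leq_eqVlt => /orP [/eqP ->|jN] //; exact: Ay.
apply: openI => //.
have [g|ng] := pselect (gd N).
  have -> : [set y | gd N -> V N y] = V N.
    by apply/seteqP; split => y /=; [apply | move=> Vy _].
  exact: (gcl N g).1.
have -> : [set y | gd N -> V N y] = setT.
  by apply/seteqP; split => y // _ /ng.
exact: openT.
Qed.

Definition fP (x : Om) : pred nat := fun m => `[< gd m /\ ~ V m x >].

Definition fv (x : Om) : R :=
  match pselect (exists m, fP x m) with
  | left e => ((ex_minn e).+1%:R)^-1
  | right _ => 0
  end.

Lemma fv_eq x m : gd m -> ~ V m x -> Aset m x -> fv x = (m.+1%:R)^-1.
Proof.
move=> gm nm Am; rewrite /fv; case: pselect => [e|ne]; last first.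
  by exfalso; apply: ne; exists m; apply/asboolP.
case: (ex_minnP e) => k /asboolP [gk nk] kmin.
suff -> : k = m by [].
apply/eqP; rewrite eqn_leq kmin ?andbT; last by apply/asboolP.
by rewrite leqNgt; apply/negP => km; apply: nk; apply: Am.
Qed.

Lemma fv_le x N : Aset N x -> fv x <= (N.+1%:R)^-1.
Proof.
move=> AN; rewrite /fv; case: pselect => [e|_]; last by rewrite invr_ge0.
case: (ex_minnP e) => k /asboolP [gk nk] _.
have Nk : (N <= k)%N by rewrite leqNgt; apply/negP => kN; apply: nk; apply: AN.
by rewrite lef_pV2 ?posrE ?ltr0n // ler_nat.
Qed.

Lemma fv_ge0 x : 0 <= fv x.
Proof. by rewrite /fv; case: pselect => // e; rewrite invr_ge0. Qed.

Lemma fv0 x : (forall m, gd m -> V m x) -> fv x = 0.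
Proof.
move=> H; rewrite /fv; case: pselect => [e|//]; exfalso.
by case: e => m /asboolP [gm nm]; apply: nm; apply: H.
Qed.

Lemma fv_pos x : x != 0 -> 0 < fv x.
Proof.
move=> x0; have [m [gm nm]] := @exists_good_sep Om R td cpt nop w0 mt x x0.
rewrite /fv; case: pselect => [e|ne]; first by rewrite invr_gt0 ltr0n.
by exfalso; apply: ne; exists m; apply/asboolP.
Qed.

Lemma fv_zero : fv 0 = 0.
Proof. by apply: fv0 => m _; exact: (@Vm0 Om w0). Qed.

Lemma fv_cont : continuous fv.
Proof.
move=> x; apply/cvgrPdist_lt => eps eps0.
have [e|ne] := pselect (exists m, fP x m).
  case: (ex_minnP e) => m /asboolP [gm nm] mmin.
  have Am : Aset m x.
    move=> j jm gj; apply: contrapT => nj.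
    have : fP x j by apply/asboolP.
    by move=> /mmin; rewrite leqNgt jm.
  have fx := @fv_eq x m gm nm Am.
  have oN : open (Aset m `&` ~` V m).
    by apply: openI; [exact: Aset_open | exact: closed_openC (gcl m gm).2].
  apply: filterS (open_nbhs_nbhs (conj oN (conj Am nm))) => y [Ay nVy].
  by rewrite fx (@fv_eq y m gm nVy Ay) subrr normr0.
have Ax N : Aset N x.
  move=> j _ gj; apply: contrapT => nj; apply: ne; exists j; exact/asboolP.
have fx : fv x = 0.
  apply: fv0 => m gm; apply: contrapT => nm; apply: ne; exists m; exact/asboolP.
pose N := Num.truncn (eps^-1).
have Neps : (N.+1%:R)^-1 < eps.
  rewrite invf_plt ?posrE ?ltr0n //; exact: truncnS_gt.
apply: filterS (open_nbhs_nbhs (conj (Aset_open N) (Ax N))) => y Ay.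
rewrite fx sub0r normrN ger0_norm ?fv_ge0 //.
exact: le_lt_trans (@fv_le y N Ay) Neps.
Qed.

End Fconstr.

Lemma seqZ_hausdorff (R : realType) : hausdorff_space (seqZ R).
Proof.
move=> p q cpq.
have : close p q by rewrite closeEnbhs.
rewrite hausdorrf_close_eq_in; last exact: Rhausdorff.
by move=> H; apply/funext => n; apply: H; rewrite inE.
Qed.

Section Unif.
Context (Om : topologicalZmodType) (R : realType) (cpt : compact [set: Om]).

Lemma unif_cont (g : Om -> R) : continuous g -> forall eps, 0 < eps ->
  \forall w \near (0:Om), forall x, `|g (x + w) - g x| < eps.
Proof.
move=> cg eps e0.
have /compact_near_coveringP ncK := cpt.
have e2 : 0 < eps / 2 by rewrite divr_gt0.
have H : \forall w \near (0:Om), [set: Om] `<=` (fun x => `|g (x + w) - g x| < eps).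
  apply: ncK => x _.
  have Nx : \forall t \near x, `|g x - g t| < eps / 2.
    by move/cvgrPdist_lt : (cg x) => /(_ _ e2).
  have nx0 : nbhs (x + 0) [set t | `|g x - g t| < eps / 2] by rewrite addr0.
  have := @add_continuous Om (x, 0) _ nx0.
  case=> [[A B] /= [nA nB] AB].
  rewrite /prop_near2; exists (A `&` [set t | `|g x - g t| < eps / 2], B).
    by split; [apply: filterI | exact: nB].
  move=> [x' w] /= [[Ax' Hx'] Bw].
  have /= H2 := AB (x', w) (conj Ax' Bw).
  rewrite (splitr eps); apply: le_lt_trans (ler_distD (g x) _ _) _.
  by rewrite distrC; apply: ltrD.
by apply: filterS H => w Hw x; exact: Hw.
Qed.

Lemma Fseq_cont (w0 : Om) (g : Om -> R) : continuous g -> continuous (Fseq w0 g).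
Proof.
move=> cg w P /uniform_nbhs [E [entE sub]].
rewrite -entourage_ballE in entE; case: entE => eps /= e0 sE.
have := unif_cont g cg eps e0.
have : (fun z => z - w) @ w --> (0:Om) by rewrite -(subrr w); exact: cont_subr.
move=> /[apply] /= H.
suff : \forall w' \near w, P (Fseq w0 g w') by [].
near=> w'.
have Hw' : forall x, `|g (x + (w' - w)) - g x| < eps by near: w'; exact: H.
apply: sub => n _; apply: sE => /=.
rewrite /ball /= /Fseq /transl_pow distrC.
have := Hw' (w + w0 *~ n).
by rewrite addrAC addrA [w + w']addrC addrK.
Unshelve. all: by end_near. Qed.

End Unif.

Lemma cont_addr (Om : topologicalZmodType) (a : Om) : continuous (fun z : Om => z + a).
Proof.
move=> z; apply: (@continuous_comp _ _ _ (fun z => (z, a)) (fun p : Om * Om => p.1 + p.2)); last exact: add_continuous.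
by apply: cvg_pair; [exact: cvg_id | exact: cvg_cst].
Qed.

Section Main.
Context (Om : topologicalZmodType) (R : realType) (td : totally_disconnected [set: Om])
  (cpt : compact [set: Om]) (nop : forall x : Om, ~ open [set x]) (w0 : Om)
  (mt : minimal_translation w0).

Let f := fv Om R w0.
Let cf : continuous f := @fv_cont Om R w0 mt.
Let Phi : Om -> seqZ R := Fseq w0 f.
Let cPhi : continuous Phi := @Fseq_cont Om R cpt w0 f cf.
Let d := Phi 0.

Lemma Phi_shift (k : int) : Defs.shift k d = Phi (w0 *~ k).
Proof.
apply/funext => n; rewrite /Defs.shift /d /Phi /Fseq /transl_pow /=.
by rewrite add0r mulrzDr addrC.
Qed.

Lemma Phi_inj w1 w2 : Phi w1 = Phi w2 -> w1 = w2.
Proof.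
move=> E.
have key : forall a, f (a + w1) = f (a + w2).
  move=> a; apply: contrapT => neq.
  pose h := fun b => f (b + w1) - f (b + w2).
  have ch : continuous h.
    move=> b; apply: cvgB.
      by apply: (@continuous_comp _ _ _ (fun z => z + w1) f); [exact: cont_addr | exact: cf].
    by apply: (@continuous_comp _ _ _ (fun z => z + w2) f); [exact: cont_addr | exact: cf].
  have oO : open (h @^-1` (~` [set 0])).
    by apply: (continuousP h).1 => //; apply: closed_openC; exact: closed_eq.
  have Oa : (h @^-1` (~` [set 0])) a by move=> /eqP; rewrite /h subr_eq0 => /eqP.
  have [n Hn] := orbit_dense Om w0 mt _ oO (ex_intro _ a Oa).
  apply: Hn; rewrite /h /=; apply/eqP; rewrite subr_eq0; apply/eqP.
  have := congr1 (fun s : seqZ R => s n) E.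
  by rewrite /Phi /Fseq /transl_pow ![_ + w0 *~ n]addrC.
have := key (- w1); rewrite addNr addrC.
have -> : f 0 = 0 by exact: fv_zero.
move=> /esym f0.
case: (eqVneq (w2 - w1) 0) => [|nz].
  by move=> /eqP; rewrite subr_eq0 => /eqP ->.
have := @fv_pos Om R td cpt nop w0 mt (w2 - w1) nz.
by rewrite -/f f0 ltxx.
Qed.

Lemma range_closed : closed (range Phi).
Proof.
apply: compact_closed; first exact: seqZ_hausdorff.
exact: continuous_compact (continuous_subspaceT cPhi) cpt.
Qed.

Lemma hull_eq : hull d = range Phi.
Proof.
apply/seteqP; split.
  rewrite /hull ((closure_id (range Phi)).1 range_closed).
  by apply: closureS => _ [k _ <-]; rewrite Phi_shift; exists (w0 *~ k).
move=> _ [w _ <-] B nB.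
have := cPhi w B nB; rewrite nbhsE => -[Op [oO Ow] sub].
have [n On] := orbit_dense Om w0 mt _ oO (ex_intro _ w Ow).
exists (Defs.shift n d); split; first by exists n.
by rewrite Phi_shift; apply: sub.
Qed.

Definition phi (y : seqZ R) : Om := xget 0 [set w | Phi w = y].

Lemma phiK w : phi (Phi w) = w.
Proof.
apply: Phi_inj; rewrite /phi.
by have := @xgetPex Om 0 [set w' | Phi w' = Phi w] (ex_intro _ w erefl).
Qed.

Lemma Phi_phi y : hull d y -> Phi (phi y) = y.
Proof. by rewrite hull_eq => -[w _ <-]; rewrite phiK. Qed.

Lemma phi_cont : {within hull d, continuous phi}.
Proof.
apply/subspace_continuousP => x; rewrite hull_eq => -[w _ <-].
suff : phi @ within (range Phi) (nbhs (Phi w)) --> phi (Phi w) by [].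
rewrite phiK.
move=> B; rewrite nbhsE => -[Op [oO Ow] OB].
have cC : compact (~` Op).
  by apply: (subclosed_compact _ cpt) => //; exact: open_closedC.
have clK : closed (Phi @` (~` Op)).
  apply: compact_closed; first exact: seqZ_hausdorff.
  exact: continuous_compact (continuous_subspaceT cPhi) cC.
have nK : nbhs (Phi w) (~` (Phi @` (~` Op))).
  apply: open_nbhs_nbhs; split; first exact: closed_openC.
  by move=> [c nc /Phi_inj Ec]; apply: nc; rewrite Ec.
suff : \forall y \near Phi w, range Phi y -> B (phi y) by [].
near=> y => Hy.
have nKy : ~ (Phi @` (~` Op)) y by near: y.
apply: OB; apply: contrapT => nO; apply: nKy.
by exists (phi y) => //; apply: Phi_phi; rewrite hull_eq.
Unshelve. all: by end_near. Qed.


Definition mulH (x y : seqZ R) : seqZ R := Phi (phi x + phi y).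
Definition invH (x : seqZ R) : seqZ R := Phi (- phi x).

Lemma phi_fst (p : seqZ R * seqZ R) : (hull d `*` hull d) p ->
  (fun q : seqZ R * seqZ R => phi q.1) @ within (hull d `*` hull d) (nbhs p) --> phi p.1.
Proof.
case: p => p1 p2 [/= H1 H2] B nB.
have N1 := (subspace_continuousP _ _).1 phi_cont p1 H1 B nB.
suff : \forall q \near (p1, p2), (hull d `*` hull d) q -> B (phi q.1) by [].
exists ([set y | hull d y -> B (phi y)], setT) => /=.
  by split => //; exact: filterT.
by move=> [q1 q2] /= [Hq1 _] [Hh1 _]; exact: Hq1 Hh1.
Qed.

Lemma phi_snd (p : seqZ R * seqZ R) : (hull d `*` hull d) p ->
  (fun q : seqZ R * seqZ R => phi q.2) @ within (hull d `*` hull d) (nbhs p) --> phi p.2.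
Proof.
case: p => p1 p2 [/= H1 H2] B nB.
have N2 := (subspace_continuousP _ _).1 phi_cont p2 H2 B nB.
suff : \forall q \near (p1, p2), (hull d `*` hull d) q -> B (phi q.2) by [].
exists (setT, [set y | hull d y -> B (phi y)]) => /=.
  by split => //; exact: filterT.
by move=> [q1 q2] /= [_ Hq2] [_ Hh2]; exact: Hq2 Hh2.
Qed.

Lemma mulH_cont : {within hull d `*` hull d, continuous (fun p : seqZ R * seqZ R => mulH p.1 p.2)}.
Proof.
apply/subspace_continuousP => p Hp.
suff : (fun q : seqZ R * seqZ R => mulH q.1 q.2) @ within (hull d `*` hull d) (nbhs p) --> mulH p.1 p.2 by [].
have H1 := @phi_fst p Hp; have H2 := @phi_snd p Hp.
have H3 : (fun q : seqZ R * seqZ R => (phi q.1, phi q.2)) @ within (hull d `*` hull d) (nbhs p) --> (phi p.1, phi p.2).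
  by apply: cvg_pair.
have H4 : (fun r : Om * Om => Phi (r.1 + r.2)) @ (phi p.1, phi p.2) --> Phi (phi p.1 + phi p.2).
  exact: (@continuous_comp _ _ _ (fun r : Om * Om => r.1 + r.2) Phi (phi p.1, phi p.2) (@add_continuous Om _) (cPhi _)).
exact: (cvg_comp _ _ H3 H4).
Qed.

Lemma invH_cont : {within hull d, continuous invH}.
Proof.
apply/subspace_continuousP => x Hx.
suff : invH @ within (hull d) (nbhs x) --> invH x by [].
have H1 := (subspace_continuousP _ _).1 phi_cont x Hx.
have H4 : (fun r : Om => Phi (- r)) @ (phi x) --> Phi (- phi x).
  exact: (@continuous_comp _ _ _ (fun r : Om => - r) Phi (phi x) (@opp_continuous Om _) (cPhi _)).
exact: (cvg_comp _ _ H1 H4).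
Qed.

Lemma main_exists : exists f : Om -> R, continuous f /\
    exists (mul : seqZ R -> seqZ R -> seqZ R) (inv : seqZ R -> seqZ R),
      hull_group_structure (Fseq w0 f 0) mul inv /\
      exists phi : seqZ R -> Om, hull_top_group_iso (Fseq w0 f 0) mul phi.
Proof.
exists f; split => //; exists mulH, invH; split.
  split; split.
  - by move=> x y _ _; rewrite hull_eq; exists (phi x + phi y).
  - by move=> x _; rewrite hull_eq; exists (- phi x).
  - by move=> x y z _ _ _; rewrite /mulH !phiK addrA.
  - by move=> x Hx; rewrite /mulH phiK add0r addr0 Phi_phi.
  - by move=> x Hx; rewrite /mulH /invH !phiK subrr addNr.
  - exact: mulH_cont.
  - exact: invH_cont.
  - by move=> k m; rewrite !Phi_shift /mulH !phiK -mulrzDr.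
exists phi; split.
- exact: phi_cont.
- exists Phi; split => //.
    by move=> w; split; [rewrite hull_eq; exists w | exact: phiK].
  exact: Phi_phi.
- by move=> x y Hx Hy; rewrite /mulH phiK.
Qed.

End Main.

Theorem lemma4p3 (R : realType) (Om : topologicalZmodType) (w0 : Om) :
  cantor_group Om -> minimal_translation w0 ->
  exists f : Om -> R, continuous f /\
    exists (mul : seqZ R -> seqZ R -> seqZ R) (inv : seqZ R -> seqZ R),
      hull_group_structure (Fseq w0 f 0) mul inv /\
      exists phi : seqZ R -> Om, hull_top_group_iso (Fseq w0 f 0) mul phi.
Proof.
move=> [td cpt nop] mt.
exact: (@main_exists Om R td cpt nop w0 mt).
Qed.
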